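(* Let $G=GL_{d+1}(L)$ with the setting below and $\xi$ given by $(a_1,\dots,a_{d+1})$, $a_1\le\dots\le a_{d+1}$. Then $T'_\xi(K)$ consists of all $\zeta\in T'(K)$ such that the polygon $\mathcal{P}\big((\mathrm{val}_L(\zeta_1),\dots,\mathrm{val}_L(\zeta_{d+1}))^{dom}\big)$ lies on or above the polygon $\mathcal{P}(a_1,a_2+[L:\mathbb{Q}_p],\dots,a_{d+1}+d[L:\mathbb{Q}_p])$ and both polygons have the same endpoint.
   Context: $L$ is a finite extension of $\mathbb{Q}_p$ with ring of integers $o_L$, prime element $\pi_L$, residue field cardinality $q$, normalized absolute value $|\ |_L$; $K$ a complete extension field of $\mathbb{Q}_p$ containing $L$; $\mathrm{val}_L:K^\times\to\mathbb{R}$ with $\mathrm{val}_L(L^\times)=\mathbb{Z}$. $G=GL_{d+1}(L)$, $P$ lower triangular Borel, $T$ diagonal torus, $U_0=GL_{d+1}(o_L)$, $\Lambda=T/(T\cap U_0)$, $\lambda:T\to\Lambda$ the projection, $W=S_{d+1}$ acting by conjugation, $\Phi^+$ roots of $T$ in $\mathrm{Lie}(P)$, $T^{--}=\{t:|\alpha(t)|_L\ge1\ \forall\alpha\in\Phi^+\}$, $\Lambda^{--}=\lambda(T^{--})$. $\xi(\mathrm{diag}(g_i))=\prod g_i^{a_i}$. $\gamma_\xi(w,\lambda(t)):=\big(\prod_{\alpha\in\Phi^+\setminus{}^{w^{-1}}\Phi^+}|\alpha(t)|_L\big)\pi_L^{\mathrm{val}_L(\xi({}^wt))-\mathrm{val}_L(\xi(t))}$,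 $\gamma_\xi^{dom}(\lambda):=\gamma_\xi(w,\lambda)$ for $w$ with ${}^w\lambda\in\Lambda^{--}$. $T'(K)=\mathrm{Hom}(\Lambda,K^\times)$, $T'_\xi(K)=\{\zeta:|\zeta(\lambda)|\le|\gamma_\xi^{dom}(\lambda)|\ \forall\lambda\}$. Coordinates: $\zeta_i:=q^{i-1}\pi_L^{a_i}\zeta(\lambda_{\{i\}})$ where $\lambda_{\{i\}}$ is the class of the diagonal matrix with $\pi_L$ in place $i$ and $1$ elsewhere. For $r\in\mathbb{R}^{d+1}$, $r^{dom}$ is its rearrangement in increasing order, and for an increasing sequence $r_1\le\dots\le r_{d+1}$, $\mathcal{P}(r)$ is the convex polygon through $(0,0),(1,r_1),(2,r_1+r_2),\dots,(d+1,r_1+\dots+r_{d+1})$. *)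

(* Defs.v *)
From HB Require Import structures.
From mathcomp Require Import all_boot all_order all_algebra all_fingroup.
From mathcomp Require Import reals exp.
Set Implicit Arguments. Unset Strict Implicit. Unset Printing Implicit Defensive.
Import Order.TTheory GRing.Theory Num.Theory.
Local Open Scope ring_scope.

(* ---------- The lattice Lambda = T / (T cap U_0) ----------
   An element t = diag(t_1,...,t_{d+1}) of T is, modulo T cap U_0 = diagonal
   units of o_L, determined by (val_L t_1, ..., val_L t_{d+1}) in Z^{d+1}.
   So Lambda = Z^{d+1}; indices are 0-based: 'I_(d.+1) = {0,...,d},
   index i here is index i+1 of the paper. *)
Definition Lam (d : nat) := {ffun 'I_d.+1 -> int}.

(* lambda_{{i}} : class of diag(1,..,pi_L (place i),..,1) *)
Definition lam_e (d : nat) (i : 'I_d.+1) : Lam d := [ffun j => ((j == i) : nat)%:Z].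

(* W = S_{d+1} acting by conjugation with the permutation matrix of w
   (P_w e_i = e_{w i}):  (w t w^{-1})_j = t_{w^{-1} j}. *)
Definition actW (d : nat) (w : 'S_d.+1) (l : Lam d) : Lam d :=
  [ffun j => l ((w^-1)%g j)].

(* Phi^+ = roots of T in Lie(P), P lower triangular: alpha_{ij}(t) = t_i/t_j
   for i > j.  On lambda(t) with valuations m: |alpha_{ij}(t)|_L = q^(m_j - m_i).
   Lambda^{--} = lambda(T^{--}) : |alpha(t)|_L >= 1 for all alpha in Phi^+. *)
Definition antidom (d : nat) (l : Lam d) : bool :=
  [forall i : 'I_d.+1, forall j : 'I_d.+1, (j < i)%N ==> (l i <= l j)].

(* (w alpha)(t) = alpha(w^{-1} t w), so w alpha_{ij} = alpha_{w i, w j}, and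
   alpha_{ij} in Phi^+ \ {}^{w^{-1}}Phi^+  iff  i > j and w i < w j.
   Exponent of q in prod_{alpha in Phi^+ \ {}^{w^{-1}}Phi^+} |alpha(t)|_L : *)
Definition gamma_qexp (d : nat) (w : 'S_d.+1) (l : Lam d) : int :=
  \sum_(i : 'I_d.+1) \sum_(j : 'I_d.+1 | (j < i)%N && (w i < w j)%N) (l j - l i).

(* val_L(xi(t)) = sum_i a_i m_i; exponent of pi_L in gamma_xi(w, lambda) *)
Definition xi_val (d : nat) (a : 'I_d.+1 -> int) (l : Lam d) : int :=
  \sum_(i : 'I_d.+1) a i * l i.

Definition gamma_piexp (d : nat) (a : 'I_d.+1 -> int) (w : 'S_d.+1) (l : Lam d) : int :=
  xi_val a (actW w l) - xi_val a l.

(* gamma_xi(w, lambda) as an element of K (the rational number q^k lies in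
   Q subset L subset K). *)
Definition gamma_xi (K : fieldType) (q : nat) (pi : K) (d : nat)
    (a : 'I_d.+1 -> int) (w : 'S_d.+1) (l : Lam d) : K :=
  ((q%:R : K) ^ gamma_qexp w l) * (pi ^ gamma_piexp a w l).

Definition dom_perm (d : nat) (l : Lam d) : 'S_d.+1 :=
  odflt 1%g [pick w : 'S_d.+1 | antidom (actW w l)].

Definition gamma_dom (K : fieldType) (q : nat) (pi : K) (d : nat)
    (a : 'I_d.+1 -> int) (l : Lam d) : K :=
  gamma_xi q pi a (dom_perm l) l.

Definition is_char (K : fieldType) (d : nat) (zeta : Lam d -> K) : Prop :=
  (forall l, zeta l != 0) /\ (forall l m, zeta (l + m) = zeta l * zeta m).

Definition in_Txi (R : realType) (K : fieldType) (absK : K -> R) (q : nat) (pi : K)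
    (d : nat) (a : 'I_d.+1 -> int) (zeta : Lam d -> K) : Prop :=
  forall l : Lam d, absK (zeta l) <= absK (gamma_dom q pi a l).

(* additive valuation on K^x (values on 0 are irrelevant) *)
Definition is_valuation (R : realType) (K : fieldType) (v : K -> R) : Prop :=
  (forall x y, x != 0 -> y != 0 -> v (x * y) = v x + v y) /\
  (forall x y, x != 0 -> y != 0 -> x + y != 0 -> Num.min (v x) (v y) <= v (x + y)).

(* coordinates zeta_i := q^{i-1} pi_L^{a_i} zeta(lambda_{{i}}) (paper's 1-based i;
   here 0-based i, so the power of q is i) *)
Definition zeta_coord (K : fieldType) (q : nat) (pi : K) (d : nat)
    (a : 'I_d.+1 -> int) (zeta : Lam d -> K) (i : 'I_d.+1) : K :=
  (q%:R : K) ^+ i * pi ^ a i * zeta (lam_e i).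

Definition rdom (R : realType) (r : seq R) : seq R := sort (fun x y : R => x <= y) r.

(* The polygon P(r) (for r increasing) as the piecewise linear function on
   [0, size r] through (k, r_1 + ... + r_k), k = 0..size r:
   P(r)(x) = sum_i r_i * clamp(x - i, 0, 1)  (0-based i). *)
Definition polygon (R : realType) (r : seq R) (x : R) : R :=
  \sum_(i < size r) r`_i * Num.min 1 (Num.max 0 (x - i%:R)).

Definition above_same_end (R : realType) (N : nat) (r s : seq R) : Prop :=
  (forall x : R, 0 <= x <= N%:R -> polygon s x <= polygon r x) /\
  polygon r N%:R = polygon s N%:R.

(* Main.v *)
Require Import Defs.
From HB Require Import structures.
From mathcomp Require Import all_boot all_order all_algebra all_fingroup.
From mathcomp Require Import reals exp.
From mathcomp Require Import lra zify ring.
Import Order.TTheory GRing.Theory Num.Theory.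
Local Open Scope ring_scope.
Set Implicit Arguments. Unset Strict Implicit.


Lemma val1 (R : realType) (K : fieldType) (v : K -> R) : is_valuation v -> v 1 = 0.
Proof.
move=> [Hm _]; have := Hm 1 1 (oner_neq0 _) (oner_neq0 _).
rewrite mulr1 => h; lra.
Qed.

Lemma valV (R : realType) (K : fieldType) (v : K -> R) (x : K) :
  is_valuation v -> x != 0 -> v x^-1 = - v x.
Proof.
move=> Hv x0; have [Hm _] := Hv.
have := Hm x^-1 x (invr_neq0 x0) x0; rewrite mulVf // val1 // => /eqP.
by rewrite eq_sym addr_eq0 => /eqP.
Qed.

Lemma valX (R : realType) (K : fieldType) (v : K -> R) (x : K) (k : nat) :
  is_valuation v -> x != 0 -> v (x ^+ k) = k%:R * v x.
Proof.
move=> Hv x0; have [Hm _] := Hv.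
elim: k => [|k IH]; first by rewrite expr0 val1 // mul0r.
by rewrite exprS Hm ?expf_neq0 // IH -addn1 natrD mulrDl mul1r addrC.
Qed.

Lemma valXz (R : realType) (K : fieldType) (v : K -> R) (x : K) (z : int) :
  is_valuation v -> x != 0 -> v (x ^ z) = z%:~R * v x.
Proof.
move=> Hv x0; case: z => k.
  by rewrite -exprnP valX.
rewrite NegzE -exprnN valV ?expf_neq0 // valX // mulrNz.
by rewrite -mulNr.
Qed.

Lemma absK_le (R : realType) (K : fieldType) (v : K -> R) (absK : K -> R) (q : nat)
    (Habs : forall x : K, x != 0 -> absK x = powR (q%:R^-1) (v x))
    (Hq : (1 < q)%N) (x y : K) :
  x != 0 -> y != 0 -> (absK x <= absK y) = (v y <= v x).
Proof.
move=> x0 y0; rewrite !Habs //.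
have qgt1 : (1 : R) < q%:R by rewrite ltr1n.
have q0 : (0 : R) < q%:R by apply: lt_trans qgt1.
have b0 : (q%:R : R)^-1 != 0 by rewrite invr_neq0 // gt_eqF.
rewrite /powR (negbTE b0) ler_expR ler_nM2r //.
apply: ln_lt0; rewrite invr_gt0 q0 /=.
by rewrite invf_lt1.
Qed.


Lemma zeta_nz (K : fieldType) (d : nat) (zeta : Lam d -> K) :
  is_char zeta -> zeta 0 = 1.
Proof.
move=> [Hn Hm]; have := Hm 0 0; rewrite addr0 => /eqP.
rewrite -subr_eq0 -{1}(mulr1 (zeta 0)) -mulrBr mulf_eq0 (negbTE (Hn 0)) /=.
by rewrite subr_eq0 eq_sym => /eqP.
Qed.

Lemma fz_add (R : realType) (K : fieldType) (v : K -> R) (d : nat) (zeta : Lam d -> K) :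
  is_valuation v -> is_char zeta ->
  {morph (fun l => v (zeta l)) : x y / x + y >-> x + y}.
Proof. by move=> [Hm _] [Hn Hz] x y /=; rewrite Hz Hm. Qed.

Lemma fz_0 (R : realType) (K : fieldType) (v : K -> R) (d : nat) (zeta : Lam d -> K) :
  is_valuation v -> is_char zeta -> v (zeta 0) = 0.
Proof. by move=> Hv Hz; rewrite zeta_nz // val1. Qed.

Lemma fz_N (R : realType) (K : fieldType) (v : K -> R) (d : nat) (zeta : Lam d -> K) l :
  is_valuation v -> is_char zeta -> v (zeta (- l)) = - v (zeta l).
Proof.
move=> Hv Hz; apply/eqP; rewrite -addr_eq0 -(fz_add Hv Hz) addNr.
by rewrite fz_0.
Qed.

Lemma fz_Mz (R : realType) (K : fieldType) (v : K -> R) (d : nat) (zeta : Lam d -> K) l k :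
  is_valuation v -> is_char zeta -> v (zeta (l *~ k)) = k%:~R * v (zeta l).
Proof.
move=> Hv Hz.
have Hn : forall m : nat, v (zeta (l *+ m)) = m%:R * v (zeta l).
  elim=> [|m IH]; first by rewrite mulr0n fz_0 // mul0r.
  by rewrite mulrS (fz_add Hv Hz) IH -addn1 natrD mulrDl mul1r addrC.
case: k => m; first by rewrite -pmulrn Hn.
by rewrite NegzE mulrNz fz_N // -pmulrn Hn mulrNz mulNr.
Qed.

Lemma fz_decomp (R : realType) (K : fieldType) (v : K -> R) (d : nat) (zeta : Lam d -> K) l :
  is_valuation v -> is_char zeta ->
  v (zeta l) = \sum_i (l i)%:~R * v (zeta (lam_e i)).
Proof.
move=> Hv Hz.
rewrite {1}(_ : l = \sum_i lam_e i *~ l i).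
  rewrite (big_morph _ (fz_add Hv Hz) (fz_0 Hv Hz)); apply: eq_bigr => i _.
  by rewrite fz_Mz.
apply/ffunP => j; rewrite sum_ffunE (bigD1 j) //= ffunMzE ffunE eqxx big1 ?addr0.
  by rewrite intz.
by move=> i ij; rewrite ffunMzE ffunE eq_sym (negbTE ij) mul0rz.
Qed.


Lemma sum_lt_min (n m : nat) : (\sum_(k < n) ((k < m)%N : nat) = minn m n)%N.
Proof.
elim: n => [|n IH]; first by rewrite big_ord0 minn0.
rewrite big_ord_recr /= IH; case: (ltnP n m) => h /=; lia.
Qed.

Lemma sum_perm_lt (n : nat) (w : 'S_n) (i : 'I_n) :
  (\sum_(j : 'I_n) ((w j < w i)%N : nat) = w i)%N.
Proof.
rewrite -(reindex_inj (h := w) (P := xpredT) (F := fun k : 'I_n => ((k < w i)%N : nat)) (@perm_inj _ w)).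
rewrite sum_lt_min; apply/minn_idPl; exact: ltnW.
Qed.

Lemma ptw (n : nat) (w : 'S_n) (i j : 'I_n) :
  (((w j < w i)%N : nat)%:Z - ((j < i)%N : nat)%:Z =
   (((i < j)%N && (w j < w i)%N) : nat)%:Z - (((j < i)%N && (w i < w j)%N) : nat)%:Z)%R.
Proof.
case: (ltngtP j i) => hji /=.
- case: (ltngtP (w j) (w i)) => hw /=.
  + by [].
  + by [].
  + by have e := perm_inj (val_inj hw); move: hji; rewrite e ltnn.
- case: (ltngtP (w j) (w i)) => hw /=; by [].
- have e : j = i by apply: val_inj.
  by rewrite e ltnn /= subrr.
Qed.

Lemma gq_eq (d : nat) (w : 'S_d.+1) (l : Lam d) :
  gamma_qexp w l = \sum_i ((w i)%:Z - (i : nat)%:Z) * l i.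
Proof.
rewrite /gamma_qexp.
pose P (i j : 'I_d.+1) := ((j < i)%N && (w i < w j)%N).
have E1 : forall i : 'I_d.+1, ((w i)%:Z - (i : nat)%:Z) =
   \sum_j ((P j i : nat)%:Z - (P i j : nat)%:Z).
  move=> i; rewrite -{1}(sum_perm_lt w i).
  have -> : ((i : nat)%:Z) = \sum_(j : 'I_d.+1) ((j < i)%N : nat)%:Z.
    rewrite -(big_morph (fun k : nat => k%:Z) (id1 := 0) (op1 := +%R) (@PoszD) erefl).
    congr Posz; rewrite sum_lt_min; apply/esym/minn_idPl; exact: ltnW.
  rewrite (big_morph (fun k : nat => k%:Z) (id1 := 0) (op1 := +%R) (@PoszD) erefl).
  rewrite -sumrB; apply: eq_bigr => j _; exact: ptw.
under [RHS]eq_bigr => i _ do rewrite E1 mulr_suml.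
rewrite [RHS](eq_bigr (fun i => \sum_j ((P j i : nat)%:Z * l i) - \sum_j ((P i j : nat)%:Z * l i))); last first.
  by move=> i _; rewrite -sumrB; apply: eq_bigr => j _; rewrite mulrBl.
rewrite sumrB exchange_big /= -sumrB; apply: eq_bigr => i _.
rewrite big_mkcond /= -sumrB; apply: eq_bigr => j _.
rewrite /P; case: ifP => _ /=; rewrite ?mul1r ?mul0r ?subrr //.
Qed.


Lemma abel (R : realType) (D g : nat -> R) (n : nat) : D 0%N = 0 ->
  \sum_(i < n) (D i.+1 - D i) * g i =
  \sum_(i < n) D i.+1 * (g i - g i.+1) + D n * g n.
Proof.
move=> D0; elim: n => [|n IH]; first by rewrite !big_ord0 D0 mul0r addr0.
rewrite !big_ord_recr /= IH; lra.
Qed.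

Definition clamp (R : realType) (t : R) := Num.min 1 (Num.max 0 t).

Lemma clamp_ge0 (R : realType) (t : R) : 0 <= clamp t.
Proof. by rewrite /clamp le_min ler01 le_max lexx. Qed.

Lemma clamp_le (R : realType) (t u : R) : t <= u -> clamp t <= clamp u.
Proof. by move=> h; rewrite /clamp le_min2 // le_max2. Qed.

Lemma clamp1 (R : realType) (t : R) : 1 <= t -> clamp t = 1.
Proof.
move=> h; rewrite /clamp; apply/min_idPl.
by rewrite le_max h orbT.
Qed.

Lemma clamp0 (R : realType) (t : R) : t <= 0 -> clamp t = 0.
Proof.
move=> h; rewrite /clamp (_ : Num.max 0 t = 0); first by apply/min_idPr; rewrite ler01.
by apply/max_idPl.
Qed.

Lemma polygon_nat (R : realType) (r : seq R) (k : nat) : (k <= size r)%N ->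
  polygon r k%:R = \sum_(i < k) r`_i.
Proof.
move=> hk; rewrite /polygon (big_ord_widen (size r) (fun i => r`_i) hk).
rewrite [RHS]big_mkcond /=; apply: eq_bigr => i _.
case: ifP => hi.
  have h1 : 1 <= k%:R - i%:R :> R by rewrite lerBrDr addrC natr1 ler_nat; lia.
  by move: (clamp1 h1); rewrite /clamp => ->; rewrite mulr1.
have h1 : k%:R - i%:R <= 0 :> R by rewrite subr_le0 ler_nat; lia.
by move: (clamp0 h1); rewrite /clamp => ->; rewrite mulr0.
Qed.

Definition psum (R : realType) (r : seq R) (k : nat) := \sum_(i < k) r`_i.

Lemma polygon_ge (R : realType) (N : nat) (r s : seq R) :
  size r = N -> size s = N ->
  (forall k, (k <= N)%N -> psum s k <= psum r k) ->
  forall x : R, 0 <= x <= N%:R -> polygon s x <= polygon r x.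
Proof.
move=> hr hs hk x /andP [x0 xN].
rewrite -subr_ge0 /polygon hr hs -sumrB.
pose D k := psum r k - psum s k.
pose g (i : nat) := clamp (x - i%:R).
have -> : \sum_(i < N) (r`_i * Num.min 1 (Num.max 0 (x - i%:R)) -
      s`_i * Num.min 1 (Num.max 0 (x - i%:R))) =
      \sum_(i < N) (D i.+1 - D i) * g i.
  apply: eq_bigr => i _; rewrite /D /g /psum /clamp !big_ord_recr /=; lra.
rewrite abel; last by rewrite /D /psum !big_ord0 subrr.
apply: addr_ge0.
  apply: sumr_ge0 => i _; apply: mulr_ge0.
    by rewrite /D subr_ge0 hk.
  rewrite subr_ge0 /g; apply: clamp_le; rewrite -addn1 natrD; lra.
apply: mulr_ge0; last exact: clamp_ge0.
by rewrite /D subr_ge0 hk.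
Qed.


Lemma mktupleE (T : Type) (n : nat) (f : 'I_n -> T) :
  val (mktuple f) = [seq f i | i <- enum 'I_n].
Proof. by []. Qed.

Lemma perm_ex (T : eqType) (n : nat) (f : 'I_n -> T) (s : seq T) :
  perm_eq s [seq f i | i <- enum 'I_n] ->
  exists p : 'S_n, s = [seq f (p i) | i <- enum 'I_n].
Proof.
rewrite -mktupleE => /tuple_permP [p ->]; exists p.
by rewrite mktupleE; apply: eq_map => i; rewrite tnth_mktuple.
Qed.

Lemma perm_map_enum (T : eqType) (n : nat) (f : 'I_n -> T) (p : 'S_n) :
  perm_eq [seq f (p i) | i <- enum 'I_n] [seq f i | i <- enum 'I_n].
Proof.
rewrite (_ : [seq f (p i) | i <- enum 'I_n] = [seq f i | i <- [seq p i | i <- enum 'I_n]]); last by elim: (enum 'I_n) => //= x s ->.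
apply: perm_map.
apply: uniq_perm; first by rewrite map_inj_uniq ?enum_uniq //; exact: perm_inj.
  exact: enum_uniq.
move=> x; rewrite mem_enum; apply/mapP; exists (p^-1 x)%g; first by rewrite mem_enum.
by rewrite permKV.
Qed.

Definition useq (d : nat) (u : Lam d) := [seq u j | j <- enum 'I_d.+1].

Definition geR (x y : int) := (y <= x)%R.

Lemma nth_useq (d : nat) (u : Lam d) (j : 'I_d.+1) : nth 0 (useq u) j = u j.
Proof.
by rewrite /useq (nth_map ord0) ?size_enum_ord // nth_ord_enum.
Qed.

Lemma antidom_sorted (d : nat) (u : Lam d) : antidom u = sorted geR (useq u).
Proof.
apply/idP/idP.
  move=> /forallP H; apply/(sortedP 0) => i.
  rewrite /useq size_map size_enum_ord => hi.
  have hi0 : (i < d.+1)%N by lia.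
  have -> : nth 0 (useq u) i = u (Ordinal hi0) by rewrite -nth_useq.
  have -> : nth 0 (useq u) i.+1 = u (Ordinal hi) by rewrite -nth_useq.
  by have := H (Ordinal hi) => /forallP /(_ (Ordinal hi0)) /implyP; apply => /=.
move=> hs; apply/forallP => i; apply/forallP => j; apply/implyP => hji.
have tr : transitive geR by move=> x y z; rewrite /geR => h1 h2; apply: le_trans h2 h1.
have rf : reflexive geR by move=> x; rewrite /geR.
have := sorted_leq_nth tr rf 0 hs; move=> /(_ j i); rewrite !nth_useq; apply.
- by rewrite inE /useq size_map size_enum_ord.
- by rewrite inE /useq size_map size_enum_ord.
- exact: ltnW.
Qed.

Lemma useq_actW (d : nat) (w : 'S_d.+1) (l : Lam d) :
  useq (actW w l) = [seq l ((w^-1)%g i) | i <- enum 'I_d.+1].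
Proof. by apply: eq_map => i; rewrite ffunE. Qed.

Lemma antidom_uniq (d : nat) (w w' : 'S_d.+1) (l : Lam d) :
  antidom (actW w l) -> antidom (actW w' l) -> actW w l = actW w' l.
Proof.
rewrite !antidom_sorted => h1 h2.
have e : useq (actW w l) = useq (actW w' l).
  apply: (sorted_eq (leT := geR)) => //.
  - by move=> x y z; rewrite /geR => h3 h4; apply: le_trans h4 h3.
  - by move=> x y /andP [h3 h4]; apply/eqP; rewrite eq_le; apply/andP; split.
  rewrite !useq_actW; apply: (perm_trans (perm_map_enum l (w^-1)%g)).
  rewrite perm_sym; exact: perm_map_enum.
by apply/ffunP => j; rewrite -!nth_useq e.
Qed.

Lemma antidom_ex (d : nat) (l : Lam d) : exists w : 'S_d.+1, antidom (actW w l).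
Proof.
have hp : perm_eq (sort geR (useq l)) [seq l i | i <- enum 'I_d.+1] by rewrite perm_sort.
have [p hs] := perm_ex hp.
exists (p^-1)%g; rewrite antidom_sorted useq_actW.
under eq_map => i do rewrite invgK.
rewrite -hs; apply: sort_sorted.
by move=> x y; rewrite /geR le_total.
Qed.

Lemma dom_perm_antidom (d : nat) (l : Lam d) : antidom (actW (dom_perm l) l).
Proof.
rewrite /dom_perm; case: pickP => [w -> // | H] /=.
have [w hw] := antidom_ex l; by rewrite H in hw.
Qed.

Lemma sort_ex (R : realType) (n : nat) (c : 'I_n -> R) :
  exists rho : 'S_n,
    sort (fun x y : R => x <= y) [seq c i | i <- enum 'I_n] = [seq c (rho i) | i <- enum 'I_n]
    /\ (forall i j : 'I_n, (i <= j)%N -> c (rho i) <= c (rho j)).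
Proof.
have hp : perm_eq (sort (fun x y : R => x <= y) [seq c i | i <- enum 'I_n]) [seq c i | i <- enum 'I_n] by rewrite perm_sort.
have [p hs] := perm_ex hp.
exists p; split => // i j hij.
have hsort := sort_sorted (leT := fun x y : R => x <= y) (@le_total _ R) [seq c i | i <- enum 'I_n].
rewrite hs in hsort.
have : forall k : 'I_n, nth 0 [seq c (p i) | i <- enum 'I_n] k = c (p k).
  by move=> k; rewrite (nth_map k) ?size_enum_ord // nth_ord_enum.
move=> hn; rewrite -!hn.
have tr : transitive (fun x y : R => x <= y) by move=> x y z; apply: le_trans.
have rf : reflexive (fun x y : R => x <= y) by move=> x /=.
have := sorted_leq_nth tr rf 0 hsort; move=> /(_ i j); apply => //.
- by rewrite inE size_map size_enum_ord.
- by rewrite inE size_map size_enum_ord.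
Qed.


Lemma sum_prefix (R : realType) (d j : nat) (F : 'I_d.+1 -> R) : (j <= d.+1)%N ->
  \sum_(i < j) F (inord i) = \sum_(k : 'I_d.+1 | (k < j)%N) F k.
Proof.
move=> hj; rewrite (big_ord_widen d.+1 (fun i => F (inord i)) hj).
by apply: eq_bigr => i _; rewrite inord_val.
Qed.

Lemma psum_map (R : realType) (d j : nat) (f : 'I_d.+1 -> R) : (j <= d.+1)%N ->
  psum [seq f i | i <- enum 'I_d.+1] j = \sum_(k : 'I_d.+1 | (k < j)%N) f k.
Proof.
move=> hj; rewrite /psum -sum_prefix //; apply: eq_bigr => i _.
rewrite (nth_map ord0) ?size_enum_ord; last by have := ltn_ord i; lia.
congr f; apply/eqP; rewrite -val_eqE /= nth_enum_ord ?inordK //; have := ltn_ord i; lia.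
Qed.

Lemma sum_reidx (R : realType) (n k : nat) (f : 'S_n) (F : 'I_n -> R) :
  \sum_(x : 'I_n | ((f^-1)%g x < k)%N) F x = \sum_(i : 'I_n | (i < k)%N) F (f i).
Proof.
rewrite (reindex_inj (h := f) (@perm_inj _ f)) /=.
by apply: eq_bigl => i; rewrite permK.
Qed.

Lemma subset_le (R : realType) (n k : nat) (c : 'I_n -> R) (rho f : 'S_n) :
  (forall i j : 'I_n, (i <= j)%N -> c (rho i) <= c (rho j)) -> (k <= n)%N ->
  \sum_(i : 'I_n | (i < k)%N) c (rho i) <= \sum_(i : 'I_n | (i < k)%N) c (f i).
Proof.
move=> hs hk; case: k hk => [|k] hk.
  by rewrite !big_pred0.
pose M := c (rho (Ordinal hk)).
pose A x := ((f^-1)%g x < k.+1)%N.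
pose B x := ((rho^-1)%g x < k.+1)%N.
have hB : forall x, B x -> c x <= M.
  move=> x hx; rewrite -(permKV rho x); apply: hs => /=; rewrite /B in hx; lia.
have hnB : forall x, ~~ B x -> M <= c x.
  move=> x hx; rewrite -(permKV rho x); apply: hs => /=; rewrite /B in hx; lia.
rewrite -!sum_reidx.
have eM : \sum_(x | A x) M = \sum_(x | B x) M.
  by rewrite /A /B !sum_reidx.
rewrite -subr_ge0.
have -> : \sum_(x | A x) c x - \sum_(x | B x) c x =
          \sum_(x | A x) (c x - M) - \sum_(x | B x) (c x - M).
  by rewrite !sumrB eM; lra.
rewrite (bigID B) /= [X in _ - X](bigID A) /=.
have -> : \sum_(i | A i && B i) (c i - M) = \sum_(i | B i && A i) (c i - M).
  by apply: eq_bigl => i; rewrite andbC.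
have h1 : 0 <= \sum_(i | A i && ~~ B i) (c i - M).
  by apply: sumr_ge0 => i /andP [_ h]; rewrite subr_ge0 hnB.
have h2 : \sum_(i | B i && ~~ A i) (c i - M) <= 0.
  by apply: sumr_le0 => i /andP [h _]; rewrite subr_le0 hB.
lra.
Qed.


Definition Qcond (R : realType) (d : nat) (b c : 'I_d.+1 -> R) :=
  forall l : Lam d, \sum_k b k * (actW (dom_perm l) l k)%:~R <= \sum_i c i * (l i)%:~R.

Definition Pcond (R : realType) (d : nat) (b c : 'I_d.+1 -> R) :=
  (forall k, (k <= d.+1)%N -> psum [seq b i | i <- enum 'I_d.+1] k <=
       psum (sort (fun x y : R => x <= y) [seq c i | i <- enum 'I_d.+1]) k) /\
  psum (sort (fun x y : R => x <= y) [seq c i | i <- enum 'I_d.+1]) d.+1 =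
  psum [seq b i | i <- enum 'I_d.+1] d.+1.

Lemma actW_const (d : nat) (w : 'S_d.+1) (z : int) :
  actW w [ffun _ => z] = [ffun _ => z].
Proof. by apply/ffunP => j; rewrite !ffunE. Qed.

Lemma sum_all (R : realType) (d : nat) (F : 'I_d.+1 -> R) :
  \sum_(k : 'I_d.+1 | (k < d.+1)%N) F k = \sum_k F k.
Proof. by apply: eq_bigl => k; rewrite ltn_ord. Qed.

Lemma Q_to_P (R : realType) (d : nat) (b c : 'I_d.+1 -> R) : Qcond b c -> Pcond b c.
Proof.
move=> HQ.
have [rho [hsort hmono]] := sort_ex c.
rewrite /Pcond hsort; split.
  move=> k hk; rewrite !psum_map //.
  pose l : Lam d := [ffun x => (((rho^-1)%g x < k)%N : nat)%:Z].
  pose m : Lam d := [ffun j : 'I_d.+1 => ((j < k)%N : nat)%:Z].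
  have e1 : actW (rho^-1)%g l = m.
    by apply/ffunP => j; rewrite !ffunE invgK permK.
  have am : antidom m.
    apply/forallP => i; apply/forallP => j; apply/implyP => hji; rewrite !ffunE.
    case: (ltnP i k) => hik; first by rewrite (ltn_trans hji hik).
    by case: (j < k)%N.
  have e2 : actW (dom_perm l) l = m.
    by rewrite (antidom_uniq (dom_perm_antidom l) (w' := (rho^-1)%g)) // e1.
  have := HQ l; rewrite e2.
  have -> : \sum_k0 b k0 * (m k0)%:~R = \sum_(k0 : 'I_d.+1 | (k0 < k)%N) b k0.
    rewrite [RHS]big_mkcond /=; apply: eq_bigr => i _; rewrite ffunE.
    by case: (i < k)%N; rewrite /= ?mulr1 ?mulr0.
  have -> : \sum_i c i * (l i)%:~R = \sum_(i : 'I_d.+1 | ((rho^-1)%g i < k)%N) c i.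
    rewrite [RHS]big_mkcond /=; apply: eq_bigr => i _; rewrite ffunE.
    by case: ((rho^-1)%g i < k)%N; rewrite /= ?mulr1 ?mulr0.
  by rewrite sum_reidx.
rewrite !psum_map // !sum_all.
have h1 := HQ [ffun _ => 1%Z]; have h2 := HQ [ffun _ => (-1)%Z].
rewrite actW_const in h1; rewrite actW_const in h2.
move: h1 h2.
under eq_bigr => i _ do rewrite ffunE mulr1.
under [X in _ <= X -> _]eq_bigr => i _ do rewrite ffunE mulr1.
have eN : forall F : 'I_d.+1 -> R, \sum_k F k * ([ffun=> (-1)%Z] k : int)%:~R = - \sum_k F k.
  by move=> F; rewrite -sumrN; apply: eq_bigr => i _; rewrite ffunE mulrN1.
rewrite !eN => h1 h2.
rewrite -(reindex_inj (h := rho) (F := c) (P := xpredT) (@perm_inj _ rho)).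
lra.
Qed.

Lemma P_to_Q (R : realType) (d : nat) (b c : 'I_d.+1 -> R) : Pcond b c -> Qcond b c.
Proof.
move=> [HP HE] l.
have [rho [hsort hmono]] := sort_ex c.
rewrite hsort in HP HE.
have au := dom_perm_antidom l.
set w := dom_perm l in au *; set u := actW w l in au *.
rewrite [X in _ <= X](reindex_inj (h := (w^-1)%g) (@perm_inj _ _)) /=.
have -> : \sum_j c ((w^-1)%g j) * (l ((w^-1)%g j))%:~R = \sum_j c ((w^-1)%g j) * (u j)%:~R.
  by apply: eq_bigr => j _; rewrite /u ffunE.
rewrite -subr_ge0 -sumrB.
pose delta (i : nat) := c ((w^-1)%g (inord i)) - b (inord i).
pose g (i : nat) : R := (u (inord (minn i d)))%:~R.
pose D (j : nat) := \sum_(i < j) delta i.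
have -> : \sum_i (c ((w^-1)%g i) * (u i)%:~R - b i * (u i)%:~R) =
          \sum_(i < d.+1) (D i.+1 - D i) * g i.
  apply: eq_bigr => i _; rewrite /D big_ord_recr /= addrC addrK /delta /g.
  have -> : minn i d = i by apply/minn_idPl; have := ltn_ord i; lia.
  by rewrite inord_val mulrBl.
rewrite abel; last by rewrite /D big_ord0.
have hD : forall j, (j <= d.+1)%N -> D j =
   \sum_(k : 'I_d.+1 | (k < j)%N) c ((w^-1)%g k) - \sum_(k : 'I_d.+1 | (k < j)%N) b k.
  move=> j hj; rewrite /D /delta sumrB.
  by rewrite (sum_prefix (fun k => c ((w^-1)%g k))) // (sum_prefix b).
have Dn : D d.+1 = 0.
  rewrite hD // !sum_all (reindex_inj (h := w) (F := fun k => c ((w^-1)%g k)) (@perm_inj _ w)) /=.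
  under eq_bigr => k _ do rewrite permK.
  move: HE; rewrite !psum_map // !sum_all.
  rewrite -(reindex_inj (h := rho) (F := c) (P := xpredT) (@perm_inj _ rho)) => ->.
  by rewrite subrr.
rewrite Dn mul0r addr0.
apply: sumr_ge0 => i _; apply: mulr_ge0.
  have hi := ltn_ord i.
  rewrite hD // subr_ge0.
  have := HP i.+1 hi; rewrite !psum_map // => h; apply: le_trans h _.
  exact: subset_le.
rewrite subr_ge0 /g ler_int.
have hi := ltn_ord i.
case: (ltnP i d) => hid.
  have -> : minn i.+1 d = i.+1 by apply/minn_idPl; lia.
  move/forallP: au => /(_ (inord i.+1)) /forallP /(_ (inord i)) /implyP; apply.
  rewrite !inordK //; lia.
have -> : minn i.+1 d = d by apply/minn_idPr; lia.
by [].
Qed.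


Lemma ase_iff (R : realType) (N : nat) (r s : seq R) : size r = N -> size s = N ->
  above_same_end N r s <->
  ((forall k, (k <= N)%N -> psum s k <= psum r k) /\ psum r N = psum s N).
Proof.
move=> hr hs; split.
  move=> [H1 H2]; split; last by rewrite /psum -!polygon_nat ?hr ?hs.
  move=> k hk; rewrite /psum -!polygon_nat ?hr ?hs //; apply: H1.
  by rewrite ler0n ler_nat hk.
move=> [H1 H2]; split; first exact: polygon_ge.
by rewrite !polygon_nat ?hr ?hs; move: H2; rewrite /psum.
Qed.

Lemma piexp_eq (d : nat) (a : 'I_d.+1 -> int) (w : 'S_d.+1) (l : Lam d) :
  gamma_piexp a w l = \sum_i (a (w i) - a i) * l i.
Proof.
rewrite /gamma_piexp /xi_val (reindex_inj (h := w) (@perm_inj _ w)) /= -sumrB.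
by apply: eq_bigr => i _; rewrite ffunE permK mulrBl.
Qed.

Unset Implicit Arguments.
Theorem lemma5p1 (R : realType) (K : fieldType) (v : K -> R) (absK : K -> R)
    (pi : K) (q degL d : nat) (a : 'I_d.+1 -> int)
    (Hv : is_valuation v)
    (Habs : forall x : K, x != 0 -> absK x = powR (q%:R^-1) (v x))
    (Habs0 : absK 0 = 0)
    (Hq : (1 < q)%N) (Hq0 : (q%:R : K) != 0)
    (Hpi0 : pi != 0) (Hvpi : v pi = 1)
    (HdegL : (0 < degL)%N) (Hvq : v (q%:R : K) = degL%:R)
    (Ha : forall i j : 'I_d.+1, (i <= j)%N -> a i <= a j)
    (zeta : Lam d -> K) (Hzeta : is_char zeta) :
  in_Txi absK q pi a zeta <->
  above_same_end d.+1
    (rdom [seq v (zeta_coord q pi a zeta i) | i <- enum 'I_d.+1])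
    [seq (a i)%:~R + (i : nat)%:R * degL%:R | i <- enum 'I_d.+1].
Proof.
pose bz (i : 'I_d.+1) : int := a i + (i : nat)%:Z * degL%:Z.
pose b (i : 'I_d.+1) : R := (a i)%:~R + (i : nat)%:R * degL%:R.
pose c (i : 'I_d.+1) : R := v (zeta_coord q pi a zeta i).
pose z (i : 'I_d.+1) : R := v (zeta (lam_e i)).
have [Hmul _] := Hv.
have [Hzn _] := Hzeta.
have hb : forall i, b i = (bz i)%:~R.
  by move=> i; rewrite /b /bz intrD intrM.
have hc : forall i, c i = b i + v (zeta (lam_e i)).
  move=> i; rewrite /c /zeta_coord !Hmul ?mulf_neq0 ?expf_neq0 ?expfz_neq0 //.
  by rewrite valX // valXz // Hvq Hvpi mulr1 /b /z; lra.
have key : forall l : Lam d,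
    (absK (zeta l) <= absK (gamma_dom q pi a l)) <->
    (\sum_k b k * (actW (dom_perm l) l k)%:~R <= \sum_i c i * (l i)%:~R).
  move=> l.
  have g0 : gamma_dom q pi a l != 0 by rewrite /gamma_dom /gamma_xi mulf_neq0 ?expfz_neq0.
  rewrite (absK_le Habs Hq (Hzn l) g0).
  set w := dom_perm l.
  have -> : v (gamma_dom q pi a l) =
      ((gamma_qexp w l * degL%:Z + gamma_piexp a w l : int))%:~R.
    rewrite /gamma_dom /gamma_xi -/w Hmul ?expfz_neq0 // !valXz // Hvq Hvpi.
    by rewrite /gamma_piexp !intrD !intrM !intrN mulr1 /=.
  have -> : gamma_qexp w l * degL%:Z + gamma_piexp a w l =
            \sum_i (bz (w i) - bz i) * l i.
    rewrite gq_eq piexp_eq mulr_suml -big_split /=; apply: eq_bigr => i _.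
    rewrite /bz; ring.
  rewrite (fz_decomp l Hv Hzeta).
  rewrite [X in _ <-> X <= _](reindex_inj (h := w) (@perm_inj _ w)) /=.
  have -> : \sum_j b (w j) * ((actW w l) (w j))%:~R = \sum_j b (w j) * (l j)%:~R.
    by apply: eq_bigr => j _; rewrite ffunE permK.
  have E : \sum_i c i * (l i)%:~R - \sum_j b (w j) * (l j)%:~R =
            \sum_i (l i)%:~R * v (zeta (lam_e i)) - ((\sum_i (bz (w i) - bz i) * l i : int))%:~R.
    rewrite rmorph_sum /= -!sumrB; apply: eq_bigr => i _.
    rewrite hc !hb intrM intrB; lra.
  by split => h; lra.
have hsz : size (rdom [seq v (zeta_coord q pi a zeta i) | i <- enum 'I_d.+1]) = d.+1.
  by rewrite /rdom size_sort size_map size_enum_ord.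
rewrite (ase_iff hsz); last by rewrite size_map size_enum_ord.
split.
  move=> HT; have := Q_to_P (b := b) (c := c) (fun l => proj1 (key l) (HT l)).
  by [].
move=> HP l; apply/key; exact: (P_to_Q (b := b) (c := c) HP).
Qed.
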